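(* Every graph $G$ satisfies $\mathrm{cop}(G)\le \mathrm{tw}(G)/2+1$.
   Context: All graphs are finite, undirected, without loops or multiple edges. A tree decomposition of $G$ is a pair $(T,\{W_x: x\in V(T)\})$ with $T$ a tree and $W_x\subseteq V(G)$ such that $\bigcup_x W_x=V(G)$, every edge of $G$ has both ends in some $W_x$, and for each $u\in V(G)$ the set $\{x: u\in W_x\}$ induces a subtree of $T$; its width is $\max_x |W_x|-1$, and $\mathrm{tw}(G)$ is the minimum width of a tree decomposition of $G$. Cops and Robber game on a connected graph: for an integer $k\ge 1$, the cop player places $k$ cops on (not necessarily distinct) vertices, then the robber is placed on a vertex; then, starting with the cops, the players alternate moves. In a cop move, each cop either stays or moves to an adjacent vertex; in a robber move, the robber stays or moves to an adjacent vertex. The cops win if at some point a cop and the robber occupy the same vertex. Both players have complete information. The cop number $\mathrm{cop}(G)$ of a connected graph $G$ is the smallest $k$ such that the cops have a winning strategy with $k$ cops; for a non-connected graph it is the maximum cop number of its connected components. *)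

(* Defs.v *)
From mathcomp Require Import all_boot all_order all_algebra.
From Stdlib Require Import ClassicalEpsilon.
Set Implicit Arguments. Unset Strict Implicit. Unset Printing Implicit Defensive.

(* A (finite, simple, undirected) graph is a finType T with a symmetric,
   irreflexive adjacency relation e : rel T (assumed in the theorem). *)

Definition pb (P : Prop) : bool :=
  if excluded_middle_informative P then true else false.

Lemma pbP (P : Prop) : reflect P (pb P).
Proof. by rewrite /pb; case: excluded_middle_informative => H; constructor. Qed.

(* A finite tree on vertex set I (nonempty in use): a connected simple
   graph with exactly #|I| - 1 edges (the edge set of ordered pairs has
   size 2 (#|I| - 1)). *)
Definition is_tree (I : finType) (t : rel I) : Prop :=
  [/\ symmetric t, irreflexive t,
      (forall x y, connect t x y) &
      #|[set p : I * I | t p.1 p.2]| = 2 * (#|I| - 1)].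

Definition tree_decomposition (T : finType) (e : rel T)
    (I : finType) (t : rel I) (W : I -> {set T}) : Prop :=
  [/\ is_tree t,
      (forall u : T, exists x, u \in W x),
      (forall u v : T, e u v -> exists x, (u \in W x) && (v \in W x)) &
      (forall (u : T) (x y : I), u \in W x -> u \in W y ->
         connect [rel a b | [&& t a b, u \in W a & u \in W b]] x y)].

Definition has_td_bagsize (T : finType) (e : rel T) (b : nat) : Prop :=
  exists (n : nat) (t : rel 'I_n.+1) (W : 'I_n.+1 -> {set T}),
    tree_decomposition e t W /\ forall x, #|W x| <= b.

Lemma has_td_bagsize_ex (T : finType) (e : rel T) :
  exists b, pb (has_td_bagsize e b).
Proof.
exists #|T|; apply/pbP; exists 0, (fun _ _ => false), (fun _ => setT).
split; last by move=> x; rewrite cardsT.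
split.
- split => //.
  + by move=> x y; rewrite (ord1 x) (ord1 y) connect0.
  + rewrite card_ord subnn muln0; apply/eqP; rewrite cards_eq0; apply/eqP/setP => p; by rewrite !inE.
- by move=> u; exists ord0; rewrite inE.
- by move=> u v _; exists ord0; rewrite !inE.
- by move=> u x y _ _; rewrite (ord1 x) (ord1 y) connect0.
Qed.

Definition tw_plus1 (T : finType) (e : rel T) : nat :=
  ex_minn (has_td_bagsize_ex e).

(* Treewidth, as an integer (it is -1 for the empty graph). *)
Definition treewidth (T : finType) (e : rel T) : int :=
  (tw_plus1 e)%:Z - 1.

Definition cops (T : finType) (k : nat) := {ffun 'I_k -> T}.

Definition caught (T : finType) (k : nat) (c : cops T k) (r : T) : Prop :=
  exists i, c i = r.

Definition cop_step (T : finType) (e : rel T) (k : nat) (c c' : cops T k) : Prop :=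
  forall i, c' i = c i \/ e (c i) (c' i).

(* cops_win e c r : from the position where the cops are at c, the robber
   at r, and it is the cops' turn to move, the cops have a winning
   strategy (inductively: the attractor of the capture positions). *)
Inductive cops_win (T : finType) (e : rel T) (k : nat) : cops T k -> T -> Prop :=
| cw_caught c r : caught c r -> cops_win e c r
| cw_move c r c' : cop_step e c c' ->
    (caught c' r \/ (forall r', (r' = r \/ e r r') -> cops_win e c' r')) ->
    cops_win e c r.

(* On the connected graph induced by the component C, k cops win:
   the cops choose their starting vertices in C, then the robber chooses
   his starting vertex in C, then the cops move first. *)
Definition k_cops_win (T : finType) (e : rel T) (C : {set T}) (k : nat) : Prop :=
  exists c0 : cops T k, (forall i, c0 i \in C) /\
    forall r, r \in C -> cops_win e c0 r.

Definition component (T : finType) (e : rel T) (v : T) : {set T} :=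
  [set u | connect e v u].

Lemma k_cops_win_ex (T : finType) (e : rel T) (v : T) :
  exists k, pb (0 < k /\ k_cops_win e (component e v) k).
Proof.
exists #|T|.+1; apply/pbP; split => //.
have vC : v \in component e v by rewrite inE connect0.
pose c0 : cops T #|T|.+1 := [ffun i : 'I_#|T|.+1 =>
  if nth v (enum T) i \in component e v then nth v (enum T) i else v].
exists c0; split.
- by move=> i; rewrite /c0 ffunE; case: ifP.
- move=> r rC; apply: cw_caught.
  have Hi : index r (enum T) < #|T|.+1.
    by rewrite ltnS cardE ltnW // index_mem mem_enum.
  exists (Ordinal Hi); rewrite /c0 ffunE /= nth_index ?mem_enum //.
  by rewrite rC.
Qed.

Definition cop_number_comp (T : finType) (e : rel T) (v : T) : nat :=
  ex_minn (k_cops_win_ex e v).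

(* Cop number of the graph: maximum cop number of its components
   (for a connected graph this is just its cop number). *)
Definition cop_number (T : finType) (e : rel T) : nat :=
  \max_(v : T) cop_number_comp e v.

(* Main.v *)
Require Import Defs.
From mathcomp Require Import all_boot all_order all_algebra.
From mathcomp Require Import zify lra.
Set Implicit Arguments. Unset Strict Implicit. Unset Printing Implicit Defensive.


Section Dist.
Variables (V : finType) (r : rel V).

Fixpoint reach (n : nat) (u v : V) : bool :=
  if n is n'.+1 then reach n' u v || [exists w, r u w && reach n' w v]
  else u == v.

Lemma reach_ex u v : exists n, reach n u v || (n == #|V|).
Proof. by exists #|V|; rewrite eqxx orbT. Qed.

Definition dist u v := ex_minn (reach_ex u v).

Lemma distP u v : reach (dist u v) u v || (dist u v == #|V|).
Proof. by rewrite /dist; case: ex_minnP. Qed.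

Lemma dist_min n u v : reach n u v -> dist u v <= n.
Proof. by rewrite /dist; case: ex_minnP => k _ H Hn; apply: H; rewrite Hn. Qed.

Lemma dist_le u v : dist u v <= #|V|.
Proof. by rewrite /dist; case: ex_minnP => k _ H; apply: H; rewrite eqxx orbT. Qed.

Lemma dist_fin u v : dist u v < #|V| -> reach (dist u v) u v.
Proof. by move=> H; move: (distP u v); rewrite (ltn_eqF H) orbF. Qed.

Lemma dist0 u : dist u u = 0.
Proof. by apply/eqP; rewrite -leqn0; apply: dist_min; rewrite /= eqxx. Qed.

Lemma dist_eq0 u v : dist u v < #|V| -> dist u v = 0 -> u = v.
Proof. by move=> H H0; move: (dist_fin H); rewrite H0 /= => /eqP. Qed.

Lemma reach_S n u v : reach n u v -> reach n.+1 u v.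
Proof. by move=> /= ->. Qed.

Lemma reach_cat n m x y z : reach n x y -> reach m y z -> reach (n + m) x z.
Proof.
elim: n x => [|n IH] x /=; first by move=> /eqP ->.
case/orP => [H|/existsP [w /andP [Hxw Hw]]] Hyz.
  by rewrite (IH _ H Hyz).
by apply/orP; right; apply/existsP; exists w; rewrite Hxw (IH _ Hw Hyz).
Qed.

Lemma dist_edge u w v : r u w -> dist u v <= (dist w v).+1.
Proof.
move=> Huw; case: (ltnP (dist w v) #|V|) => H.
  apply: dist_min; apply/orP; right; apply/existsP; exists w.
  by rewrite Huw /=; apply: dist_fin.
by apply: leq_trans (dist_le _ _) _; apply: leqW.
Qed.

Lemma dist_tri x y z : dist x z <= dist x y + dist y z.
Proof.
case: (ltnP (dist x y) #|V|) => H1; last first.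
  by apply: leq_trans (dist_le _ _) _; apply: leq_trans H1 (leq_addr _ _).
case: (ltnP (dist y z) #|V|) => H2; last first.
  by apply: leq_trans (dist_le _ _) _; apply: leq_trans H2 (leq_addl _ _).
by apply: dist_min; apply: reach_cat (dist_fin H1) (dist_fin H2).
Qed.

Hypothesis rsym : symmetric r.

Lemma reach_sym n u v : reach n u v -> reach n v u.
Proof.
elim: n u v => [|n IH] u v /=; first by rewrite eq_sym.
case/orP => [H|/existsP [w /andP [Huw Hw]]]; first by rewrite IH.
have := reach_cat (IH _ _ Hw) (_ : reach 1 w u); rewrite addn1; apply.
by apply/orP; right; apply/existsP; exists u; rewrite rsym Huw /=.
Qed.

Lemma dist_sym u v : dist u v = dist v u.
Proof.
suff H : forall u v, dist u v <= dist v u by apply/eqP; rewrite eqn_leq !H.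
move=> x y; case: (ltnP (dist y x) #|V|) => H; last first.
  by apply: leq_trans (dist_le _ _) H.
by apply: dist_min; apply: reach_sym; apply: dist_fin.
Qed.

Lemma dist_step x a : 0 < dist x a < #|V| ->
  exists w, r x w /\ dist w a = (dist x a).-1.
Proof.
case/andP=> Hp Hf; have := dist_fin Hf.
case Ed: (dist x a) Hp Hf => [|n] // _ Hf /=.
case/orP => [H|/existsP [w /andP [Hxw Hw]]].
  by have := dist_min H; rewrite Ed ltnn.
exists w; split => //; apply/eqP; rewrite eqn_leq dist_min //=.
by have := dist_edge a Hxw; rewrite Ed.
Qed.

Definition stp a x := odflt x [pick w | r x w && (dist w a == (dist x a).-1)].

Lemma stp_adj a x : stp a x = x \/ r x (stp a x).
Proof. by rewrite /stp; case: pickP => [w /andP [H _]|_]; [right|left]. Qed.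

Lemma stp_le a x : dist x a < #|V| -> dist (stp a x) a <= (dist x a).-1.
Proof.
rewrite /stp; case: pickP => [w /andP [_ /eqP ->]//|Hn Hf].
case: (posnP (dist x a)) => [->//|Hp].
have [w [H1 H2]] := dist_step (introT andP (conj Hp Hf)).
by move: (Hn w); rewrite H1 H2 eqxx.
Qed.

Lemma reach_conn n u v : reach n u v -> connect r u v.
Proof.
elim: n u => [|n IH] u /=; first by move=> /eqP ->.
case/orP => [/IH //|/existsP [w /andP [H1 H2]]].
by apply: connect_trans (connect1 H1) (IH _ H2).
Qed.

Lemma reach_path x p : path r x p -> reach (size p) x (last x p).
Proof.
elim: p x => [|y p IH] x /=; first by rewrite eqxx.
case/andP => H1 H2; apply/orP; right; apply/existsP; exists y.
by rewrite H1 IH.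
Qed.

Lemma conn_dist u v : connect r u v -> dist u v < #|V|.
Proof.
case/connectP => p Hp ->; case: (shortenP Hp) => p' Hp' Hu _.
apply: leq_ltn_trans (dist_min (reach_path Hp')) _.
have := card_uniqP Hu; rewrite /= => H.
by have := max_card (mem (u :: p')); rewrite H.
Qed.

End Dist.


Section Edges.
Variables (V : finType) (r : rel V).
Hypothesis rsym : symmetric r.
Hypothesis rconn : forall a b, connect r a b.

Lemma par_prop (x0 u : V) : u != x0 ->
  r u (stp r x0 u) /\ dist r (stp r x0 u) x0 < dist r u x0.
Proof.
move=> Hu; have Hf := conn_dist (rconn u x0).
have Hp : 0 < dist r u x0.
  by rewrite lt0n; apply/negP => /eqP H; move/eqP: Hu; apply; apply: dist_eq0 Hf H.
have Hl := stp_le Hf.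
case: (stp_adj r x0 u) => [E|H]; last by split => //; lia.
by move: Hl; rewrite E; lia.
Qed.

Lemma edges_lb (x0 : V) : 2 * (#|V| - 1) <= #|[set p : V * V | r p.1 p.2]|.
Proof.
pose A := [set~ x0].
pose F := [set (u, stp r x0 u) | u in A].
pose G := [set (stp r x0 u, u) | u in A].
have cA : #|A| = #|V| - 1 by rewrite cardsC1; lia.
have cF : #|F| = #|A|.
  by apply: card_in_imset => u v _ _ [].
have cG : #|G| = #|A|.
  by apply: card_in_imset => u v _ _ [].
have FG : F :&: G = set0.
  apply/setP => [[a b]]; rewrite !inE; apply/negP => /andP [].
  case/imsetP => u Hu [-> ->]; case/imsetP => v Hv [E1 E2].
  move: Hu Hv; rewrite !inE => Hu Hv.
  have [_ H1] := par_prop Hu; have [_ H2] := par_prop Hv.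
  by move: H1 H2; rewrite -E1 E2; lia.
have sub : F :|: G \subset [set p : V * V | r p.1 p.2].
  apply/subsetP => [[a b]]; rewrite !inE => /orP [] /imsetP [u Hu [-> ->]] /=;
  move: Hu; rewrite !inE => Hu; have [H _] := par_prop Hu => //.
  by rewrite rsym.
have := subset_leq_card sub; rewrite cardsU FG cards0 cF cG cA; lia.
Qed.
End Edges.


Definition Nb (T : finType) (e : rel T) (D : {set T}) : {set T} :=
  [set y | (y \notin D) && [exists x in D, e x y]].

Lemma cross (V : finType) (r : rel V) (P : pred V) a b :
  connect r a b -> P a -> ~~ P b -> exists u v, [/\ r u v, P u & ~~ P v].
Proof.
case/connectP => p Hp ->; elim: p a Hp => [|c p IH] a /=.
  by move=> _ ->.
case/andP => H1 H2 Pa Pl; case Pc: (P c).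
  by apply: IH H2 Pc Pl.
by exists a, c; rewrite Pc.
Qed.

Definition cut (I : finType) (t : rel I) (w z : I) : rel I :=
  [rel a b | t a b && ~~ (((a == w) && (b == z)) || ((a == z) && (b == w)))].

Lemma tree_cut (I : finType) (t : rel I) : is_tree t ->
  forall w z, t w z -> ~~ connect (cut t w z) w z.
Proof.
case=> tsym tirr tconn tcard w z Hwz; apply/negP => Hc.
have csym : symmetric (cut t w z).
  move=> a b; rewrite /cut /= tsym; congr (_ && ~~ _).
  by rewrite orbC (andbC (a == z)) (andbC (a == w)).
have cconn : forall a b, connect (cut t w z) a b.
  move=> a b; apply: (connect_sub (e := t)) (tconn a b) => u v Huv.
  case Ec: (cut t w z u v); first by apply: connect1.
  move: Ec; rewrite /cut /= Huv /= => /negbFE /orP [] /andP [/eqP -> /eqP ->] //.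
  by rewrite (sym_connect_sym csym).
have Hwz' : w != z by apply/negP => /eqP E; move: Hwz; rewrite E tirr.
have := edges_lb csym cconn w.
set E' := [set p | _].
have sub : E' \subset [set p : I * I | t p.1 p.2] :\: [set (w, z); (z, w)].
  apply/subsetP => [[a b]]; rewrite !inE /= => /andP [-> H] /=.
  by move: H; rewrite !xpair_eqE andbT.
have sub2 : [set (w, z); (z, w)] \subset [set p : I * I | t p.1 p.2].
  by apply/subsetP => [[a b]]; rewrite !inE !xpair_eqE => /orP [] /andP [/eqP -> /eqP ->] /=; rewrite // tsym.
have := subset_leq_card sub; rewrite cardsD (setIidPr sub2) cards2 tcard.
have := max_card (mem [set w; z]); rewrite cards2 Hwz' /= => Hc2.
rewrite xpair_eqE (negbTE Hwz') /=; lia.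
Qed.

Section TD.
Variables (T : finType) (e : rel T) (n : nat) (t : rel 'I_n.+1)
  (W : 'I_n.+1 -> {set T}).
Hypothesis esym : symmetric e.
Hypothesis Htd : tree_decomposition e t W.

Lemma bag_next (D : {set T}) (r0 : T) : r0 \in D ->
  (forall u, u \in D -> connect [rel a b | e a b && (a \in D) && (b \in D)] r0 u) ->
  forall x, Nb e D \subset W x ->
  exists z, Nb e D \subset W z /\ exists2 d, d \in D & d \in W z.
Proof.
move=> Hr0 Dconn x Hx.
case: Htd => [[tsym tirr tconn tcard] Hcov Hedge Hsub].
pose S := [set y | [exists d in D, d \in W y]].
pose tS := [rel a b | t a b && (a \in S) && (b \in S)].
pose eD := [rel a b | e a b && (a \in D) && (b \in D)].
have claim0 : forall u p, u \in D -> path eD u p -> forall y1 y2,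
    u \in W y1 -> last u p \in W y2 -> connect tS y1 y2.
  move=> u p; elim: p u => [|u' p IH] u Hu /=.
    move=> _ y1 y2 H1 H2; apply: (connect_sub (e := [rel a b | [&& t a b, u \in W a & u \in W b]])) (Hsub u y1 y2 H1 H2).
    move=> a b /= /and3P [Hab Ha Hb]; apply: connect1; rewrite /= Hab !inE.
    by apply/andP; split; apply/existsP; exists u; rewrite Hu.
  case/andP => /= /andP [/andP [He _] Hu'] Hp y1 y2 H1 H2.
  have [y /andP [Hy1 Hy2]] := Hedge _ _ He.
  apply: connect_trans (IH _ Hu' Hp y y2 Hy2 H2).
  apply: (connect_sub (e := [rel a b | [&& t a b, u \in W a & u \in W b]])) (Hsub u y1 y H1 Hy1).
  move=> a b /= /and3P [Hab Ha Hb]; apply: connect1; rewrite /= Hab !inE.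
  by apply/andP; split; apply/existsP; exists u; rewrite Hu.
have tSsym : symmetric tS by move=> a b /=; rewrite tsym andbAC -!andbA andbCA.
have [y0 Hy0] := Hcov r0.
have HS : forall y, y \in S -> connect tS y0 y.
  move=> y; rewrite inE => /existsP [d /andP [Hd Hdy]].
  have /connectP [p Hp Ep] := Dconn d Hd.
  by apply: (claim0 r0 p Hr0 Hp); rewrite -?Ep.
have y0S : y0 \in S by rewrite inE; apply/existsP; exists r0; rewrite Hr0.
pose z := [arg min_(z < y0 in S) dist t z x].
have [zS zmin] : z \in S /\ forall y, y \in S -> dist t z x <= dist t y x.
  by rewrite /z; case: arg_minnP => // z' H1 H2; split.
have zD : exists2 d, d \in D & d \in W z.
  by move: zS; rewrite inE => /existsP [d /andP [H1 H2]]; exists d.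
have Hfin : forall y, dist t y x < #|'I_n.+1| by move=> y; apply: conn_dist.
case: (posnP (dist t z x)) => Hz0.
  by exists z; split => //; rewrite (dist_eq0 (Hfin z) Hz0).
have [w [Hzw Hw]] := dist_step (introT andP (conj Hz0 (Hfin z))).
have wS : w \notin S.
  by apply/negP => /zmin; rewrite Hw; lia.
pose t' := cut t z w.
pose X := [set a | connect t' w a].
have Hcut := tree_cut (And4 tsym tirr tconn tcard) Hzw.
have zX : z \notin X.
  rewrite inE; apply/negP => H; move/negP: Hcut; apply.
  have t'sym : symmetric t'.
    move=> a b; rewrite /t' /cut /= tsym; congr (_ && ~~ _).
    by rewrite orbC (andbC (a == w)) (andbC (a == z)).
  by rewrite (sym_connect_sym t'sym).
have xX : x \in X.
  have : forall k u, dist t u x = k -> k < dist t z x -> connect t' u x.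
    elim=> [|k IH] u Hu Hk.
      by rewrite (dist_eq0 (Hfin u) Hu) connect0.
    have Hpos : 0 < dist t u x by rewrite Hu.
    have [u' [Huu' Hu']] := dist_step (introT andP (conj Hpos (Hfin u))).
    apply: connect_trans (IH u' _ _); last first.
    - by lia.
    - by rewrite Hu' Hu.
    apply: connect1; rewrite /t' /cut /= Huu' /=.
    apply/negP => /orP [] /andP [/eqP E1 /eqP E2].
      by move: Hu Hk; rewrite E1; lia.
    by move: Hu' Hk; rewrite E2 Hu; lia.
  by move=> H; rewrite inE; apply: (H _ w erefl); lia.
have SX : forall y, y \in S -> y \notin X.
  move=> y yS; apply/negP => yX.
  have HzS : connect tS z y.
    apply: connect_trans (HS y yS); rewrite (sym_connect_sym tSsym); exact: HS.
  have yX' : ~~ (fun a => a \notin X) y by rewrite /= negbK.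
  have [u [v [/= /andP [/andP [Huv uS] vS] uX vX]]] := cross (P := fun a => a \notin X) HzS zX yX'.
  move: vX; rewrite negbK => vX.
  case Hc: (t' v u).
    by move: uX; rewrite inE (connect_trans _ (connect1 Hc)) //; rewrite inE in vX.
  move: Hc; rewrite /t' /cut /= tsym Huv /= => /negbFE /orP [] /andP [/eqP E1 /eqP E2].
    by move: zX; rewrite -E1 vX.
  by move: wS; rewrite -E1 vS.
move=> /=; exists z; split => //.
apply/subsetP => v Hv.
have vx : v \in W x by apply: (subsetP Hx).
move: (Hv); rewrite inE => /andP [_ /existsP [d /andP [Hd Hdv]]].
have [y /andP [Hdy Hvy]] := Hedge _ _ Hdv.
have yS : y \in S by rewrite inE; apply/existsP; exists d; rewrite Hd.
have [a [b [/= /and3P [Hab Ha Hb] aX bX]]] := cross (P := fun a => a \in X) (Hsub v x y vx Hvy) xX (SX y yS).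
case Hc: (t' a b).
  by move: bX; rewrite inE (connect_trans _ (connect1 Hc)) //; rewrite inE in aX.
move: Hc; rewrite /t' /cut /= Hab /= => /negbFE /orP [] /andP [/eqP E1 /eqP E2].
  by move: zX; rewrite -E1 aX.
by rewrite -E2.
Qed.
End TD.


Section Guard.
Variables (T : finType) (e : rel T) (C : {set T}).
Hypothesis esym : symmetric e.
Hypothesis Cclosed : forall x y, x \in C -> e x y -> y \in C.
Hypothesis Cfin : forall x y, x \in C -> y \in C -> dist e x y < #|T|.

Definition ell a b := dist e b a.
Definition pth a b j := iter (ell a b - j) (stp e a) b.
Definition onP a b c := (dist e c a <= ell a b) && (c == pth a b (dist e c a)).
Definition sig a b r := minn (dist e r a) (ell a b).
Definition mv a b c r :=
  if onP a b c then
    (if dist e c a < sig a b r then pth a b (dist e c a).+1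
     else if sig a b r < dist e c a then pth a b (dist e c a).-1 else c)
  else stp e a c.
Definition Ag a c r := dist e c a <= (dist e r a).+1.
Definition Est a b c r :=
  [&& onP a b c, dist e c a <= (sig a b r).+1 & sig a b r <= (dist e c a).+1].
Definition mu a b c r :=
  if Est a b c r then 0 else
  if onP a b c then
    (if dist e c a <= (sig a b r).+1 then ell a b - dist e c a
     else ell a b + 1 + dist e c a)
  else 2 * ell a b + 2 + dist e c a.

Lemma stp_C a x : x \in C -> stp e a x \in C.
Proof. by move=> Hx; case: (stp_adj e a x) => [->|H] //; apply: Cclosed H. Qed.

Lemma pth_C a b j : b \in C -> pth a b j \in C.
Proof. by rewrite /pth; elim: (ell a b - j) => //= k IH Hb; apply/stp_C/IH. Qed.

Lemma pth_dist a b j : a \in C -> b \in C -> j <= ell a b -> dist e (pth a b j) a = j.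
Proof.
move=> Ha Hb Hj; rewrite /pth.
suff H : forall k, k <= ell a b -> dist e (iter k (stp e a) b) a = ell a b - k.
  by rewrite H; lia.
elim=> [|k IH] Hk; first by rewrite subn0.
rewrite iterS.
have Hd := IH (ltnW Hk).
have Hin : iter k (stp e a) b \in C by elim: k {IH Hk Hd} => //= k IH; apply/stp_C.
have Hf := Cfin Hin Ha.
have Hp : 0 < dist e (iter k (stp e a) b) a < #|T| by rewrite Hf Hd andbT; lia.
have := stp_le Hf; rewrite Hd => Hle.
case: (stp_adj e a (iter k (stp e a) b)) => [E|H].
  by move: Hle; rewrite E Hd; lia.
apply/eqP; rewrite eqn_leq; apply/andP; split; first by lia.
have := dist_edge a H; rewrite Hd; lia.
Qed.

Lemma pth_S a b j : j < ell a b -> pth a b j = stp e a (pth a b j.+1).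
Proof. by move=> H; rewrite /pth -iterS; congr iter; lia. Qed.

Lemma pth_ell a b : pth a b (ell a b) = b.
Proof. by rewrite /pth subnn. Qed.

Lemma pth0 a b : a \in C -> b \in C -> pth a b 0 = a.
Proof.
move=> Ha Hb; have H := pth_dist Ha Hb (leq0n _).
by apply: dist_eq0 H; rewrite Cfin // pth_C.
Qed.

Lemma pth_distb a b j : j <= ell a b -> dist e (pth a b j) b <= ell a b - j.
Proof.
rewrite /pth => _; elim: (ell a b - j) => [|k IH] /=; first by rewrite dist0.
case: (stp_adj e a (iter k (stp e a) b)) => [->|H]; first by lia.
by have := dist_edge b (_ : e (stp e a (iter k (stp e a) b)) (iter k (stp e a) b)); rewrite esym => /(_ H); lia.
Qed.

Lemma onP_pth a b j : a \in C -> b \in C -> j <= ell a b -> onP a b (pth a b j).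
Proof. by move=> Ha Hb Hj; rewrite /onP pth_dist // Hj eqxx. Qed.

Lemma onPE a b c : onP a b c -> c = pth a b (dist e c a) /\ dist e c a <= ell a b.
Proof. by case/andP => H1 /eqP H2. Qed.

Lemma mv_step a b c r : mv a b c r = c \/ e c (mv a b c r).
Proof.
rewrite /mv; case: ifP => HP; last exact: stp_adj.
have [E Hl] := onPE HP.
move: E Hl; set j := dist e c a => E Hl; clearbody j; subst c.
case: ifP => H1.
  have Hlt : j < ell a b by move: H1; rewrite /sig; lia.
  rewrite (pth_S Hlt).
  case: (stp_adj e a (pth a b j.+1)) => H; [by left; rewrite H|by right; rewrite esym].
case: ifP => H2; last by left.
have Hlt : j.-1 < ell a b by lia.
have Ej : j.-1.+1 = j by lia.
rewrite (pth_S Hlt) Ej.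
case: (stp_adj e a (pth a b j)) => H; [by left|by right].
Qed.

Lemma mv_C a b c r : c \in C -> mv a b c r \in C.
Proof. by move=> Hc; case: (mv_step a b c r) => [->|H] //; apply: Cclosed H. Qed.

Lemma rob a r r' : (r' = r \/ e r r') ->
  dist e r a <= (dist e r' a).+1 /\ dist e r' a <= (dist e r a).+1.
Proof.
case=> [->|H]; first by lia.
by split; apply: dist_edge; rewrite // esym.
Qed.

Lemma Ag_pres a b c r r' : a \in C -> b \in C -> c \in C ->
  (r' = r \/ e r r') -> Ag a c r -> Ag a (mv a b c r) r'.
Proof.
move=> Ha Hb Hc Hr; have [R1 R2] := rob a Hr; rewrite /Ag /mv => HA.
case: ifP => HP.
  have [E Hl] := onPE HP.
  have Hs : sig a b r <= dist e r a by rewrite /sig; lia.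
  case: ifP => H1.
    by rewrite pth_dist //; move: H1 Hs R1; rewrite /sig; lia.
  case: ifP => H2; last by lia.
  rewrite pth_dist //; lia.
have := stp_le (a := a) (Cfin Hc Ha); lia.
Qed.

Lemma Est_mv a b c r : a \in C -> b \in C -> Est a b c r -> mv a b c r = pth a b (sig a b r).
Proof.
move=> Ha Hb /and3P [HP H1 H2]; have [E Hl] := onPE HP; rewrite /mv HP.
case: ifP => H3; first by congr pth; lia.
case: ifP => H4; first by congr pth; lia.
by rewrite {1}E; congr pth; lia.
Qed.

Lemma Est_pres a b c r r' : a \in C -> b \in C ->
  (r' = r \/ e r r') -> Est a b c r -> Est a b (mv a b c r) r'.
Proof.
move=> Ha Hb Hr HE; have [R1 R2] := rob a Hr; rewrite (Est_mv Ha Hb HE).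
have Hs : sig a b r <= ell a b by rewrite /sig; lia.
rewrite /Est onP_pth // pth_dist //=; rewrite /sig in Hs *; lia.
Qed.

Lemma Est_Ag a b c r : Est a b c r -> Ag a c r.
Proof. by case/and3P => _ H _; rewrite /Ag; move: H; rewrite /sig; lia. Qed.

Lemma Est_Agb a b c r : r \in C -> Est a b c r -> Ag b c r.
Proof.
move=> Hr /and3P [HP H1 H2]; have [E Hl] := onPE HP.
rewrite /Ag E; have := pth_distb Hl.
have := dist_tri e b r a; rewrite (dist_sym esym b r) -/(ell a b).
move: H1 H2; rewrite /sig; lia.
Qed.

Lemma cap_a a b c r : a \in C -> b \in C -> c \in C -> r = a -> Ag a c r -> mv a b c r = r.
Proof.
move=> Ha Hb Hc -> HA; move: HA; rewrite /Ag dist0 => HA.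
have Hs : sig a b a = 0 by rewrite /sig dist0; lia.
rewrite /mv Hs; case: ifP => HP.
  have [E Hl] := onPE HP.
  case: ifP => H2.
    by rewrite (_ : (dist e c a).-1 = 0) ?pth0 //; lia.
  have H0 : dist e c a = 0 by lia.
  by rewrite E H0 pth0.
case: (posnP (dist e c a)) => H0.
  have Hc0 := onP_pth Ha Hb (leq0n (ell a b)); rewrite pth0 // in Hc0.
  by move: HP; rewrite (dist_eq0 (Cfin Hc Ha) H0) Hc0.
have := stp_le (a := a) (Cfin Hc Ha) => H.
by apply: dist_eq0; [apply: Cfin => //; apply: stp_C | lia].
Qed.

Lemma cap_b a b c r : a \in C -> b \in C -> r = b -> Est a b c r -> mv a b c r = r.
Proof.
move=> Ha Hb Er HE; rewrite (Est_mv Ha Hb HE) Er.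
have -> : sig a b b = ell a b by rewrite /sig /ell; lia.
by rewrite pth_ell.
Qed.

Lemma mu_Est a b c r : Est a b c r -> mu a b c r = 0.
Proof. by rewrite /mu => ->. Qed.

Lemma mu_dec a b c r r' : a \in C -> b \in C -> c \in C ->
  (r' = r \/ e r r') -> ~~ Est a b c r -> mu a b (mv a b c r) r' < mu a b c r.
Proof.
move=> Ha Hb Hc Hr HnE; have [R1 R2] := rob a Hr.
have Hs' : forall r0, sig a b r0 <= ell a b by move=> r0; rewrite /sig; lia.
have Hsl : sig a b r <= (sig a b r').+1 /\ sig a b r' <= (sig a b r).+1.
  by rewrite /sig; lia.
case: Hsl => S1 S2.
rewrite {2}/mu (negbTE HnE) /mv.
case: ifP => HP.
  have [E Hl] := onPE HP.
  have Hns : ~~ ((dist e c a <= (sig a b r).+1) && (sig a b r <= (dist e c a).+1)).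
    by move: HnE; rewrite /Est HP.
  case: ifP => H1.
    have Hlt : (dist e c a).+1 <= ell a b by move: (Hs' r); lia.
    have Hd := pth_dist Ha Hb Hlt.
    rewrite /mu onP_pth // Hd.
    have -> : (dist e c a <= (sig a b r).+1) by lia.
    case: ifP => _; first lia.
    case: ifP => H5; lia.
  case: ifP => H2.
    have Hlt : (dist e c a).-1 <= ell a b by lia.
    have Hd := pth_dist Ha Hb Hlt.
    have -> : (dist e c a <= (sig a b r).+1) = false by lia.
    rewrite /mu onP_pth // Hd.
    case: ifP => _; first lia.
    case: ifP => H5; lia.
  by exfalso; move: Hns H1 H2; lia.
have Hf := Cfin Hc Ha.
have Hpos : 0 < dist e c a.
  rewrite lt0n; apply/negP => /eqP H0.
  have Hc0 := onP_pth Ha Hb (leq0n (ell a b)); rewrite pth0 // in Hc0.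
  by move: HP; rewrite (dist_eq0 Hf H0) Hc0.
have Hle := stp_le (a := a) Hf.
rewrite /mu; case: ifP => H6; first lia.
case: ifP => HP'.
  have [_ Hl'] := onPE HP'; case: ifP => H7; lia.
lia.
Qed.

End Guard.


Section Reassign.
Variables (T : finType) (m : nat) (A : 'I_m -> T * T) (N Y2 : {set T}).
Hypothesis m_gt0 : 0 < m.
Hypothesis NY : N \subset Y2.
Hypothesis cY : #|Y2| <= 2 * m.
Definition ends (i : 'I_m) y := (y == (A i).1) || (y == (A i).2).
Hypothesis Nends : forall y, y \in N -> exists i, ends i y.

Let i0 : 'I_m := Ordinal m_gt0.
Definition resp y := odflt i0 [pick i | ends i y].
Lemma respP y : y \in N -> ends (resp y) y.
Proof.
move=> Hy; rewrite /resp; case: pickP => [i //|H].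
by have [i Hi] := Nends Hy; move: (H i); rewrite Hi.
Qed.
Definition R i := [set y | (y \in N) && (resp y == i)].
Definition keep i := [&& (A i).1 \in R i, (A i).2 \in R i & (A i).1 != (A i).2].
Definition yi i := odflt (A i).1 [pick y in R i].
Definition free (p : 'I_m * bool) := ~~ keep p.1 && (p.2 || (R p.1 == set0)).
Definition F := [set p | free p].
Definition Rest := Y2 :\: N.
Definition sv (p : 'I_m * bool) :=
  nth (if p.2 then (A p.1).2 else (A p.1).1) (enum Rest) (index p (enum F)).
Definition f i s := if free (i, s) then sv (i, s) else yi i.
Definition A2 i := if keep i then A i else (f i false, f i true).

Lemma R_ends i y : y \in R i -> ends i y.
Proof. by rewrite inE => /andP [Hy /eqP <-]; apply: respP. Qed.

Lemma R_single i y y' : ~~ keep i -> y \in R i -> y' \in R i -> y = y'.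
Proof.
move=> Hk Hy Hy'; case: (eqVneq y y') => // Hne; exfalso.
move/negP: Hk; apply; rewrite /keep.
have := R_ends Hy; have := R_ends Hy'; rewrite /ends.
case/orP => /eqP E1; case/orP => /eqP E2.
- by move: Hne; rewrite E1 E2 eqxx.
- by rewrite -E1 -E2 Hy Hy' eq_sym Hne.
- by rewrite -E1 -E2 Hy Hy' Hne.
- by move: Hne; rewrite E1 E2 eqxx.
Qed.

Lemma yi_in i : R i != set0 -> yi i \in R i.
Proof.
move=> H; rewrite /yi; case: pickP => [y //|H0].
by move: H; case/set0Pn => y Hy; move: (H0 y); rewrite Hy.
Qed.

Lemma cardRest : #|Rest| <= #|F|.
Proof.
have cN : #|N| = \sum_i #|R i|.
  rewrite -sum1_card (partition_big resp predT) //=.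
  by apply: eq_bigr => i _; rewrite sum1dep_card.
have cF : #|F| = \sum_i (free (i, true) + free (i, false)).
  rewrite -sum1dep_card big_mkcond /=.
  transitivity (\sum_(p : 'I_m * bool) (if free (p.1, p.2) then 1 else 0)).
    by apply: eq_bigr => [[i s]].
  rewrite -(pair_bigA _ (fun i s => if free (i, s) then 1 else 0)).
  by apply: eq_bigr => i _; rewrite big_bool; case: (free _); case: (free _).
have key : forall i, 2 <= free (i, true) + free (i, false) + #|R i|.
  move=> i; rewrite /free /=.
  case Hk: (keep i) => /=.
    move: Hk; rewrite /keep => /and3P [H1 H2 H3].
    have : [set (A i).1; (A i).2] \subset R i.
      by apply/subsetP => y; rewrite in_set2 => /orP [] /eqP ->.
    by move/subset_leq_card; rewrite cards2 H3.
  case HR: (R i == set0) => /=; first by [].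
  by have := card_gt0 (R i); rewrite HR /=; lia.
have cRest : #|Rest| = #|Y2| - #|N| by rewrite cardsD (setIidPr NY).
have : \sum_(i < m) 2 <= \sum_i (free (i, true) + free (i, false) + #|R i|).
  by apply: leq_sum => i _; apply: key.
rewrite big_split /= -cF -cN sum_nat_const card_ord => H.
rewrite cRest leq_subLR addnC; apply: leq_trans cY _; rewrite mulnC; exact: H.
Qed.

Lemma reassign_ok : [/\
   (forall y, y \in Y2 -> exists i, (y == (A2 i).1) || (y == (A2 i).2)),
   (forall y, y \in N -> exists i,
      ((A2 i == A i) && ends i y) || (((A2 i).1 == y) && ends i y)) &
   (forall i, (((A2 i).1 \in Y2) || ((A2 i).1 == (A i).1) || ((A2 i).1 == (A i).2)) &&
              (((A2 i).2 \in Y2) || ((A2 i).2 == (A i).1) || ((A2 i).2 == (A i).2)))].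
Proof.
have HNR : forall y, y \in N -> y \in R (resp y) by move=> y Hy; rewrite inE Hy eqxx.
have Hnf : forall i, ~~ keep i -> R i != set0 -> A2 i = (yi i, f i true).
  move=> i Hk HR; rewrite /A2 (negbTE Hk) /f /free /= (negbTE Hk) /=.
  by rewrite (negbTE HR).
split.
- move=> y Hy; case HN: (y \in N).
    exists (resp y); have Hr := HNR y HN.
    case Hk: (keep (resp y)).
      by rewrite /A2 Hk; apply: respP.
    have HR : R (resp y) != set0 by apply/set0Pn; exists y.
    rewrite (Hnf _ (negbT Hk) HR) /=.
    by rewrite -(R_single (negbT Hk) Hr (yi_in HR)) eqxx.
  have yR : y \in Rest by rewrite inE HN Hy.
  set k := index y (enum Rest).
  have Hk : k < size (enum F).
    by rewrite -cardE; apply: leq_trans cardRest; rewrite cardE index_mem mem_enum.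
  set p := nth (i0, false) (enum F) k.
  have pF : p \in F by rewrite -mem_enum mem_nth.
  have Hidx : index p (enum F) = k by rewrite index_uniq // enum_uniq.
  have Hsv : sv p = y by rewrite /sv Hidx nth_index // mem_enum.
  have Hfree : free p by move: pF; rewrite inE.
  exists p.1; move: Hfree Hsv; rewrite [p]surjective_pairing /=; move: (p.1) (p.2) => i s Hfree Hsv.
  have Hk' : ~~ keep i by move: Hfree; rewrite /free => /andP [].
  rewrite /A2 (negbTE Hk') /f.
  by case: s Hfree Hsv => /= -> ->; rewrite eqxx ?orbT.
- move=> y Hy; exists (resp y); have Hr := HNR y Hy.
  case Hk: (keep (resp y)).
    by rewrite /A2 Hk eqxx respP.
  have HR : R (resp y) != set0 by apply/set0Pn; exists y.
  rewrite (Hnf _ (negbT Hk) HR) /= -(R_single (negbT Hk) Hr (yi_in HR)) eqxx respP //.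
  by rewrite orbT.
- move=> i; case Hk: (keep i); first by rewrite /A2 Hk !eqxx !orbT.
  have Hsv : forall s, free (i, s) -> (sv (i, s) \in Y2) || (sv (i, s) == (A i).1) || (sv (i, s) == (A i).2).
    move=> s _; rewrite /sv /=.
    case: (ltnP (index (i, s) (enum F)) (size (enum Rest))) => H.
      have := mem_nth (if s then (A i).2 else (A i).1) H.
      by rewrite mem_enum inE => /andP [_ ->].
    by rewrite nth_default //; case: (s); rewrite eqxx ?orbT.
  rewrite /A2 Hk /f /=.
  apply/andP; split; case: ifP => Hf; try by apply: Hsv.
  + have HR : R i != set0.
      by move: Hf; rewrite /free Hk /=; case: (R i == set0).
    have := yi_in HR; rewrite inE => /andP [H _].
    by rewrite (subsetP NY _ H).
  + by move: Hf; rewrite /free Hk.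
Qed.
End Reassign.

Lemma reassign (T : finType) (m : nat) (A : 'I_m -> T * T) (N Y2 : {set T}) :
  0 < m -> N \subset Y2 -> #|Y2| <= 2 * m ->
  (forall y, y \in N -> exists i, ends A i y) ->
  exists A2 : 'I_m -> T * T, [/\
   (forall y, y \in Y2 -> exists i, ends A2 i y),
   (forall y, y \in N -> exists i,
      ((A2 i == A i) && ends A i y) || (((A2 i).1 == y) && ends A i y)) &
   (forall i, (((A2 i).1 \in Y2) || ((A2 i).1 == (A i).1) || ((A2 i).1 == (A i).2)) &&
              (((A2 i).2 \in Y2) || ((A2 i).2 == (A i).1) || ((A2 i).2 == (A i).2)))].
Proof.
move=> Hm NY cY Hends; have [K1 K2 K3] := reassign_ok Hm NY cY Hends.
by exists (A2 A N Y2 Hm).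
Qed.


Lemma comp_conn (V : finType) (r0 r1 : rel V) x u :
  subrel r0 r1 -> connect r0 x u ->
  connect [rel a b | r1 a b && (a \in [set w | connect r0 x w]) && (b \in [set w | connect r0 x w])] x u.
Proof.
move=> Hsub /connectP [p Hp ->]; apply/connectP; exists p => //.
set rD := [rel a b | _].
suff H : forall z, connect r0 x z -> path r0 z p -> path rD z p by apply: H.
elim: p {Hp} => [|y p IH] z //= Hz /andP [Hzy Hp].
have Hy : connect r0 x y by apply: connect_trans Hz (connect1 Hzy).
by rewrite /rD /= Hsub //= !inE Hz Hy /=; apply: IH.
Qed.

Section Game.
Variables (T : finType) (e : rel T) (n : nat) (t : rel 'I_n.+1)
  (W : 'I_n.+1 -> {set T}) (b m : nat) (v0 : T).
Hypothesis esym : symmetric e.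
Hypothesis Htd : tree_decomposition e t W.
Hypothesis Hbag : forall x, #|W x| <= b.
Hypothesis Hm : 0 < m.
Hypothesis Hbm : b <= 2 * m.

Definition C := component e v0.

Lemma Cclosed : forall x y, x \in C -> e x y -> y \in C.
Proof. by move=> x y; rewrite !inE => H1 H2; apply: connect_trans H1 (connect1 H2). Qed.

Lemma Cconn x u : x \in C -> connect e x u -> u \in C.
Proof. by rewrite !inE => H1 H2; apply: connect_trans H1 H2. Qed.

Lemma Cfin : forall x y, x \in C -> y \in C -> dist e x y < #|T|.
Proof.
move=> x y; rewrite !inE => Hx Hy; apply: conn_dist.
by apply: connect_trans _ Hy; rewrite (sym_connect_sym esym).
Qed.

Definition Prot (A : 'I_m -> T * T) (c : cops T m) r y :=
  exists i, (y = (A i).1 /\ Ag e y (c i) r) \/ (y = (A i).2 /\ Est e (A i).1 (A i).2 (c i) r).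

Record Inv (D Y : {set T}) (A : 'I_m -> T * T) (c : cops T m) (r : T) : Prop := {
  I_c : forall i, c i \in C;
  I_r : r \in C;
  I_A : forall i, ((A i).1 \in C) && ((A i).2 \in C);
  I_rD : (r \in D) || (r \in Nb e D);
  I_NY : Nb e D \subset Y;
  I_YW : exists z, Y \subset W z;
  I_YD : exists2 y, y \in Y & y \in D;
  I_Yends : forall y, y \in Y -> exists i, ends A i y;
  I_prot : forall y, y \in Nb e D -> Prot A c r y }.

Definition mvall (A : 'I_m -> T * T) (c : cops T m) r : cops T m :=
  [ffun i => mv e (A i).1 (A i).2 (c i) r].
Definition musum (A : 'I_m -> T * T) (c : cops T m) r :=
  \sum_i mu e (A i).1 (A i).2 (c i) r.

Lemma step_valid (A : 'I_m -> T * T) (c : cops T m) (r : T) : cop_step e c (mvall A c r).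
Proof.
move=> i; rewrite ffunE; case: (mv_step esym (A i).1 (A i).2 (c i) r) => H; [by left|by right].
Qed.

Lemma capture (A : 'I_m -> T * T) (c : cops T m) (r : T) :
  (forall i, c i \in C) -> (forall i, ((A i).1 \in C) && ((A i).2 \in C)) ->
  Prot A c r r -> cops_win e c r.
Proof.
move=> Hc HA [i Hi]; apply: (cw_move (c' := mvall A c r)); first exact: step_valid.
left; exists i; rewrite ffunE; have /andP [Ha Hb] := HA i.
case: Hi => [[E H]|[E H]].
  by apply: (cap_a (C := C)) => //; [exact: Cclosed | exact: Cfin | by rewrite -E].
by apply: (cap_b (C := C)).
Qed.

Lemma setup (D : {set T}) (r0 : T) (A : 'I_m -> T * T) (x : 'I_n.+1) :
  r0 \in D -> (forall u, u \in D -> connect [rel a b | e a b && (a \in D) && (b \in D)] r0 u) ->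
  D \subset C -> Nb e D \subset W x ->
  (forall i, ((A i).1 \in C) && ((A i).2 \in C)) ->
  (forall y, y \in Nb e D -> exists i, ends A i y) ->
  exists (Y2 : {set T}) (A2 : 'I_m -> T * T), [/\ Nb e D \subset Y2, (exists z, Y2 \subset W z),
     (exists2 y, y \in Y2 & y \in D), (forall y, y \in Y2 -> exists i, ends A2 i y) &
     (forall i, ((A2 i).1 \in C) && ((A2 i).2 \in C)) /\
     (forall y, y \in Nb e D -> exists i,
        ((A2 i == A i) && ends A i y) || (((A2 i).1 == y) && ends A i y))].
Proof.
move=> Hr0 Hconn DC Hx HA Hends.
have [z [Hz [d Hd Hdz]]] := bag_next Htd Hr0 Hconn Hx.
set Y2 := W z :&: (D :|: Nb e D).
have NY : Nb e D \subset Y2.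
  by apply/subsetP => y Hy; rewrite in_setI (subsetP Hz _ Hy) in_setU Hy orbT.
have cY : #|Y2| <= 2 * m.
  by apply: leq_trans (subset_leq_card (subsetIl _ _)) _; apply: leq_trans (Hbag z) Hbm.
have Y2C : forall y, y \in Y2 -> y \in C.
  move=> y; rewrite in_setI in_setU => /andP [_ /orP [H|H]]; first exact: (subsetP DC).
  move: H; rewrite inE => /andP [_ /existsP [w /andP [Hw Hwy]]].
  by apply: Cclosed Hwy; apply: (subsetP DC).
have [A2 [K1 K2 K3]] := reassign Hm NY cY Hends.
exists Y2, A2; split => //.
- by exists z; apply: subsetIl.
- by exists d => //; rewrite in_setI Hdz in_setU Hd.
split => //.
- move=> i; have /andP [H1 H2] := K3 i; have /andP [Ha Hb] := HA i.
  apply/andP; split; [move: H1|move: H2];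
    by case/orP => [/orP [H|/eqP ->]|/eqP ->] //; apply: Y2C.
Qed.

Lemma main_ind k : forall (D Y : {set T}) (A : 'I_m -> T * T) (c : cops T m) (r : T), #|D| < k -> Inv D Y A c r -> cops_win e c r.
Proof.
elim: k => [|k IHk] D Y A c r HD //.
suff H : forall s c r, musum A c r < s -> Inv D Y A c r -> cops_win e c r.
  by move=> HI; apply: (H (musum A c r).+1).
elim=> [|s IHs] {}c {}r Hs HI //.
case: HI => Hc Hr HA HrD HNY HYW HYD HYe Hprot.
case: (boolP (r \in Nb e D)) => HrN.
  by apply: (capture Hc HA); apply: Hprot.
have HrD' : r \in D by move: HrD; rewrite (negbTE HrN) orbF.
case: (boolP [forall i, Est e (A i).1 (A i).2 (c i) r]) => HE.
- have HEi : forall i, Est e (A i).1 (A i).2 (c i) r by move=> i; apply: (forallP HE).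
  case: (boolP (r \in Y)) => HrY.
    have [i Hi] := HYe r HrY; apply: (capture Hc HA); exists i.
    case/orP: Hi => /eqP Hi; [left|right]; split => //.
    by rewrite {1}Hi; apply: Est_Ag (HEi i).
  pose e2 := [rel x y | [&& e x y, x \notin Y & y \notin Y]].
  pose D2 := [set u | connect e2 r u].
  have pathD : forall y p, y \in D -> y \notin Y -> path e2 y p ->
      (last y p \in D) && (last y p \notin Y).
    move=> y p; elim: p y => [|y' p IH] y /=; first by move=> -> ->.
    move=> Hy HyY /andP [/and3P [Hyy' _ Hy'Y] Hp]; apply: IH => //.
    case Hy'D: (y' \in D) => //; exfalso.
    have : y' \in Nb e D by rewrite inE Hy'D /=; apply/existsP; exists y; rewrite Hy Hyy'.
    by move/(subsetP HNY) => H; rewrite H in Hy'Y.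
  have D2D : forall u, u \in D2 -> (u \in D) && (u \notin Y).
    by move=> u; rewrite inE => /connectP [p Hp ->]; apply: pathD.
  have rD2 : r \in D2 by rewrite inE connect0.
  have D2C : D2 \subset C.
    apply/subsetP => u; rewrite inE => Hu; apply: (Cconn Hr).
    apply: (connect_sub (e := e2)) Hu => x y /and3P [H _ _]; exact: connect1.
  have NbD2Y : Nb e D2 \subset Y.
    apply/subsetP => y; rewrite inE => /andP [HyD2 /existsP [x /andP [Hx Hxy]]].
    apply/negPn/negP => HyY; move/negP: HyD2; apply.
    have := Hx; rewrite inE => Hx'; rewrite inE; apply: connect_trans Hx' (connect1 _).
    by have /andP [_ H] := D2D x Hx; rewrite /= Hxy H HyY.
  have cD2 : #|D2| < #|D|.
    apply: proper_card; apply/properP; split.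
      by apply/subsetP => u /D2D /andP [].
    by case: HYD => y1 Hy1 Hy1D; exists y1 => //; apply/negP => /D2D; rewrite Hy1 andbF.
  have Hconn2 : forall u, u \in D2 -> connect [rel a b | e a b && (a \in D2) && (b \in D2)] r u.
    move=> u; rewrite inE => Hu.
    by apply: (comp_conn (r0 := e2) (r1 := e)) Hu => ? ? /and3P [].
  case: HYW => z Hz.
  have Hx : Nb e D2 \subset W z by apply: subset_trans NbD2Y Hz.
  have Hends : forall y, y \in Nb e D2 -> exists i, ends A i y.
    by move=> y /(subsetP NbD2Y); apply: HYe.
  have [Y2 [A2 [NY2 YW2 YD2 Ye2 [HA2 K2]]]] := setup rD2 Hconn2 D2C Hx HA Hends.
  apply: (IHk D2 Y2 A2); first by lia.
  constructor => //; first by rewrite rD2.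
  move=> y Hy; have [i Hi] := K2 y Hy; exists i.
  case/orP: Hi => /andP [/eqP E Hend].
    case/orP: Hend => /eqP Hy'; [left|right]; rewrite E; split => //.
    by rewrite {1}Hy'; apply: Est_Ag (HEi i).
  left; split; first by rewrite E.
  case/orP: Hend => /eqP Hy'; rewrite {1}Hy'.
    exact: Est_Ag (HEi i).
  exact: (Est_Agb (C := C) esym Hr (HEi i)).
- case/forallPn: HE => i0 Hi0.
  apply: (cw_move (c' := mvall A c r)); first exact: step_valid.
  right => r' Hr'.
  have Hc' : forall i, mvall A c r i \in C.
    by move=> i; rewrite ffunE; apply: (mv_C esym Cclosed) (Hc i).
  have Hr'C : r' \in C by case: Hr' => [->|H] //; apply: Cclosed H.
  apply: IHs; last first.
    constructor => //.
      case: Hr' => [->|H]; first by rewrite HrD'.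
      case Hr'D: (r' \in D) => //=.
      by rewrite inE Hr'D /=; apply/existsP; exists r; rewrite HrD' H.
    move=> y Hy; have [i [[E H]|[E H]]] := Hprot y Hy; exists i; [left|right];
      rewrite ffunE; split => //; subst y; have /andP [Ha Hb] := HA i.
      by apply: (Ag_pres esym Cclosed Cfin) => //.
    by apply: (Est_pres (C := C) esym Cclosed Cfin) => //.
  have Hle : forall i, mu e (A i).1 (A i).2 (mvall A c r i) r' <= mu e (A i).1 (A i).2 (c i) r.
    move=> i; rewrite ffunE; have /andP [Ha Hb] := HA i.
    case: (boolP (Est e (A i).1 (A i).2 (c i) r)) => HEs.
      rewrite (mu_Est HEs) leqn0; apply/eqP/mu_Est.
      by apply: (Est_pres (C := C) esym Cclosed Cfin) => //.
    by apply/ltnW/(mu_dec (C := C) esym Cclosed Cfin) => //.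
  have Hlt : mu e (A i0).1 (A i0).2 (mvall A c r i0) r' < mu e (A i0).1 (A i0).2 (c i0) r.
    rewrite ffunE; have /andP [Ha Hb] := HA i0.
    by apply: (mu_dec (C := C) esym Cclosed Cfin) => //.
  move: Hs; rewrite /musum.
  rewrite (bigD1 i0 (F := fun i => mu e (A i).1 (A i).2 (c i) r)) //=.
  rewrite (bigD1 i0 (F := fun i => mu e (A i).1 (A i).2 (mvall A c r i) r')) //=.
  have H3 : \sum_(i < m | i != i0) mu e (A i).1 (A i).2 (mvall A c r i) r' <= \sum_(i < m | i != i0) mu e (A i).1 (A i).2 (c i) r.
    by apply: leq_sum => i _; apply: Hle.
  move=> H; rewrite -ltnS; apply: leq_ltn_trans _ H; rewrite -addSn; exact: leq_add Hlt H3.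
Qed.

Lemma comp_win : k_cops_win e (component e v0) m.
Proof.
have v0C : v0 \in C by rewrite inE connect0.
exists [ffun _ => v0]; split; first by move=> i; rewrite ffunE.
move=> r Hr.
have Hconn0 : forall u, u \in C -> connect [rel a b | e a b && (a \in C) && (b \in C)] v0 u.
  by move=> u; rewrite inE => Hu; apply: (comp_conn (r0 := e) (r1 := e)).
have NbC : forall y, y \in Nb e C -> False.
  move=> y; rewrite inE => /andP [Hy /existsP [x /andP [Hx Hxy]]].
  by rewrite (Cclosed Hx Hxy) in Hy.
have Hx : Nb e C \subset W ord0 by apply/subsetP => y /NbC.
pose A0 := fun _ : 'I_m => (v0, v0).
have HA0 : forall i, ((A0 i).1 \in C) && ((A0 i).2 \in C) by move=> i; rewrite /= v0C.
have Hends : forall y, y \in Nb e C -> exists i, ends A0 i y by move=> y /NbC.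
have [Y2 [A2 [NY2 YW2 YD2 Ye2 [HA2 K2]]]] := setup v0C Hconn0 (subxx _) Hx HA0 Hends.
apply: (main_ind (k := #|C|.+1) (D := C) (Y := Y2) (A := A2)) => //.
constructor => //.
- by move=> i; rewrite ffunE.
- by rewrite Hr.
- by move=> y /NbC.
Qed.

End Game.


Unset Implicit Arguments.
Import Order.TTheory GRing.Theory Num.Theory.
Local Open Scope ring_scope.

Theorem proposition5 (T : finType) (e : rel T)
    (e_sym : symmetric e) (e_irr : irreflexive e) :
  ((cop_number e)%:R : rat) <= (treewidth e)%:~R / 2 + 1.
Proof.
set B := tw_plus1 e.
have HB : has_td_bagsize e B.
  by apply/pbP; rewrite /B /tw_plus1; case: ex_minnP.
case: HB => nn [t [W [Htd Hbag]]].
set M := (B.+1)./2.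
have HM : (B <= 2 * M)%N /\ (2 * M <= B.+1)%N.
  have := odd_double_half B.+1; rewrite -/M -muln2.
  by case: (odd B.+1) => /=; lia.
have Hcop : (cop_number e <= M)%N.
  apply/bigmax_leqP => v _.
  have HBpos : (0 < B)%N.
    case: Htd => _ Hcov _ _; have [x Hx] := Hcov v.
    apply: leq_trans (Hbag x); rewrite card_gt0; apply/set0Pn; by exists v.
  rewrite /cop_number_comp; case: ex_minnP => k _ Hmin; apply: Hmin.
  apply/pbP; split; first by lia.
  apply: (comp_win v e_sym Htd Hbag) => //; lia.
have H : (cop_number e * 2 <= B + 1)%N by lia.
rewrite -(ler_nat rat) natrM natrD in H.
rewrite /treewidth -/B intrB (_ : (B%:Z)%:~R = B%:R :> rat) //.
lra.
Qed.
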